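(* Let $k\ge 3$ and let $p>3$ be a prime dividing $2k+1$. Then every root (in an algebraic closure of $\mathbb{F}_p$) of the reduction of $Q_{k-1}(q)$ modulo $p$, and hence of $P_{k-1}(q)$ modulo $p$, has multiplicity at most $4$. Consequently, for every $a\in\mathbb{F}_p$, $(x-a)^5$ does not divide $p_{k-1}(x)$ in $\mathbb{F}_p[x]$; in particular the exponents $n_a$ in any factorization $m_{k-1}(x)\equiv x\prod_{a\neq0}(x-a)^{n_a}\pmod p$ satisfy $n_a\le 4$.
   Context: $Q_{k-1}(q)=q^{4k+4}-q^{4k+3}-q^{4k+2}-q^{4k+1}+q^3+q^2+q-1=(q^4-1)P_{k-1}(q)$ with $P_{k-1}(q)=1+\sum_{l=1}^{k} q^{4l-4}(q^4-q^3-q^2-q)$. $p_{k-1}(x)$ is the polynomial with $P_{k-1}(q)=q^{2k}p_{k-1}(q+q^{-1})$ (given by $p_0=x^2-x-3$, $p_1=(x^3-2x^2-3x+5)(x+1)$, $p_k=(x^2-2)p_{k-1}-p_{k-2}$), and $m_{k-1}$ is $p_{k-1}$ if $k\not\equiv2\pmod3$ and $p_{k-1}/(x+1)$ if $k\equiv2\pmod 3$. *)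

(* Defs.v *)
From HB Require Import structures.
From mathcomp Require Import all_boot all_order all_algebra all_field.
Set Implicit Arguments. Unset Strict Implicit. Unset Printing Implicit Defensive.
Import Order.TTheory GRing.Theory Num.Theory.
Local Open Scope ring_scope.

(* Qk k = Q_{k-1}(q) = q^{4k+4}-q^{4k+3}-q^{4k+2}-q^{4k+1}+q^3+q^2+q-1 in Z[q] *)
Definition Qk (k : nat) : {poly int} :=
  'X^((4*k+4)%N) - 'X^((4*k+3)%N) - 'X^((4*k+2)%N) - 'X^((4*k+1)%N) + 'X^3 + 'X^2 + 'X - 1.

(* Pk k = P_{k-1}(q) = 1 + sum_{l=1}^k q^{4l-4}(q^4-q^3-q^2-q) *)
Definition Pk (k : nat) : {poly int} :=
  1 + \sum_(1%N <= l < k.+1) 'X^((4 * l - 4)%N) * ('X^4 - 'X^3 - 'X^2 - 'X).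

(* pair (p_j, p_{j+1}) *)
Fixpoint ppair (j : nat) : {poly int} * {poly int} :=
  match j with
  | 0 => ('X^2 - 'X - 3%:P,
          ('X^3 - 2%:P * 'X^2 - 3%:P * 'X + 5%:P) * ('X + 1))
  | j'.+1 => let: (a, b) := ppair j' in (b, ('X^2 - 2%:P) * b - a)
  end.

Definition psmall (j : nat) : {poly int} := (ppair j).1.

(* msmall k = m_{k-1}: p_{k-1} if k mod 3 <> 2, and p_{k-1}/(x+1) otherwise *)
Definition msmall (k : nat) : {poly int} :=
  if (k %% 3 == 2)%N then psmall k.-1 %/ ('X + 1) else psmall k.-1.

Definition redp (R : nzRingType) (f : {poly int}) : {poly R} :=
  map_poly (fun z : int => z%:~R) f.

(* Main.v *)
Require Import Defs.
From HB Require Import structures.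
From mathcomp Require Import all_boot all_order all_algebra all_field.
From Stdlib Require Import Ring Lia.
Import Order.TTheory GRing.Theory Num.Theory.
Local Open Scope ring_scope.
Set Implicit Arguments. Unset Strict Implicit. Unset Printing Implicit Defensive.

Lemma mc_rt (R : comNzRingType) :
  ring_theory (0 : R) 1 +%R *%R (fun x y => x - y) -%R eq.
Proof.
split=> //=; [exact: add0r|exact: addrC|exact: addrA|exact: mul1r|exact: mulrC|
  exact: mulrA|exact: mulrDl|exact: subrr].
Qed.

Section G.
Variables (T : Type) (z o : T) (ad mu sb : T -> T -> T) (op : T -> T).
Hypothesis th : ring_theory z o ad mu sb op eq.
Add Ring GR : th.
Local Infix "+" := ad. Local Infix "*" := mu. Local Notation "- x" := (op x).
Local Notation "x - y" := (sb x y).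

Lemma g_comb three two w3 w2 w1 w0 wm :
  three = o + (o + o) -> two = o + o ->
  (o * three * three * three * three) * w3 + (o * two * two * two * two) * w2 + o * w1 + z * w0 + (- - - - o) * wm = z ->
  (o * three * three * three) * w3 + (o * two * two * two) * w2 + o * w1 + z * w0 + (- - - o) * wm = z ->
  (o * three * three) * w3 + (o * two * two) * w2 + o * w1 + z * w0 + (- - o) * wm = z ->
  (o * three) * w3 + (o * two) * w2 + o * w1 + z * w0 + (- o) * wm = z ->
  two * (two * (two * (three * w3))) = z.
Proof.
move=> h3 h2 e4 e3 e2 e1.
transitivity (((o * three * three * three * three) * w3 + (o * two * two * two * two) * w2 + o * w1 + z * w0 + (- - - - o) * wm) - two * ((o * three * three * three) * w3 + (o * two * two * two) * w2 + o * w1 + z * w0 + (- - - o) * wm) - ((o * three * three) * w3 + (o * two * two) * w2 + o * w1 + z * w0 + (- - o) * wm) + two * ((o * three) * w3 + (o * two) * w2 + o * w1 + z * w0 + (- o) * wm)).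
  rewrite h3 h2; ring.
rewrite e4 e3 e2 e1; ring.
Qed.

Lemma g_zero0 w0 : z = o * z + o * z + o * z + o * w0 + o * z -> w0 = z.
Proof. move=> h; transitivity (o * z + o * z + o * z + o * w0 + o * z); [ring|by []]. Qed.

Lemma g_Qsplit A B C D E3 E2 X :
  A - B - C - D + E3 + E2 + X - o =
  o * E3 + o * (A + E2) + o * (X - B) + o * (- C - o) + o * (- D).
Proof. ring. Qed.

End G.

Section Part1.
Variable L : fieldType.
Implicit Types F G : {poly L}.

Definition Eop F := 'X * F^`().

Lemma EopD F G : Eop (F + G) = Eop F + Eop G.
Proof. by rewrite /Eop derivD mulrDr. Qed.
Lemma EopZ c F : Eop (c *: F) = c *: Eop F.
Proof. by rewrite /Eop derivZ scalerAr. Qed.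
Lemma EopN F : Eop (- F) = - Eop F.
Proof. by rewrite /Eop derivN mulrN. Qed.
Lemma EopB F G : Eop (F - G) = Eop F - Eop G.
Proof. by rewrite EopD EopN. Qed.
Lemma Eop_Xn m : Eop 'X^m = m%:R *: 'X^m.
Proof.
rewrite /Eop derivXn scaler_nat; case: m => [|m] /=.
  by rewrite !mulr0n mulr0.
by rewrite mulrnAr -exprS.
Qed.
Lemma Eop1 : Eop 1 = 0.
Proof. by rewrite /Eop derivC mulr0. Qed.

Variable n : nat.
Hypothesis h3 : (n + 3)%:R = 2%:R :> L.
Hypothesis h2 : (n + 2)%:R = 1 :> L.
Hypothesis h1 : (n + 1)%:R = 0 :> L.
Hypothesis h0 : n%:R = -1 :> L.

Definition W3 : {poly L} := 'X^3.
Definition W2 : {poly L} := 'X^(n + 3) + 'X^2.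
Definition W1 : {poly L} := 'X - 'X^(n + 2).
Definition W0 : {poly L} := - 'X^(n + 1) - 1.
Definition Wm : {poly L} := - 'X^n.

Definition Gc (c3 c2 c1 c0 cm : L) :=
  c3 *: W3 + c2 *: W2 + c1 *: W1 + c0 *: W0 + cm *: Wm.

Lemma Eop_X : Eop 'X = 'X.
Proof. by rewrite /Eop derivX mulr1. Qed.
Lemma EW3 : Eop W3 = 3%:R *: W3.
Proof. by rewrite /W3 Eop_Xn. Qed.
Lemma EW2 : Eop W2 = 2%:R *: W2.
Proof. by rewrite /W2 EopD !Eop_Xn h3 scalerDr. Qed.
Lemma EW1 : Eop W1 = W1.
Proof. by rewrite /W1 EopB Eop_X Eop_Xn h2 scale1r. Qed.
Lemma EW0 : Eop W0 = 0.
Proof. by rewrite /W0 EopB EopN Eop_Xn h1 Eop1 scale0r !oppr0 addr0. Qed.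
Lemma EWm : Eop Wm = - Wm.
Proof. by rewrite /Wm EopN Eop_Xn h0 scaleN1r. Qed.

Lemma EGc c3 c2 c1 c0 cm :
  Eop (Gc c3 c2 c1 c0 cm) = Gc (c3 * 3%:R) (c2 * 2%:R) c1 0 (- cm).
Proof.
rewrite /Gc !EopD !EopZ EW3 EW2 EW1 EW0 EWm !scalerA scaler0 scale0r.
by rewrite scalerN scaleNr.
Qed.

Lemma hornerGc c3 c2 c1 c0 cm (x : L) :
  (Gc c3 c2 c1 c0 cm).[x] = c3 * W3.[x] + c2 * W2.[x] + c1 * W1.[x] + c0 * W0.[x] + cm * Wm.[x].
Proof. rewrite /Gc /W3 /W2 /W1 /W0 /Wm !hornerD !hornerZ !hornerD. reflexivity. Qed.
End Part1.


Section Part1b.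
Variable L : fieldType.
Variable z : L.

Lemma dvd_Eop m (F : {poly L}) :
  ('X - z%:P) ^+ m.+1 %| F -> ('X - z%:P) ^+ m %| Eop F.
Proof.
case/dvdpP=> S ->; rewrite /Eop derivM deriv_exp derivXsubC mul1r /=.
apply: dvdp_mull; apply: dvdp_add.
  by rewrite exprS mulrA dvdp_mull.
by rewrite -mulr_natr mulrA dvdp_mulr // dvdp_mulIr.
Qed.

Lemma dvd_root m (F : {poly L}) : ('X - z%:P) ^+ m.+1 %| F -> F.[z] = 0.
Proof.
move=> h; apply/eqP; rewrite -/(root F z) -dvdp_XsubCl.
by apply: dvdp_trans h; rewrite exprS dvdp_mulr.
Qed.

Lemma part1_core (n : nat) (hn : (0 < n)%N)
  (h3 : (n + 3)%:R = 2%:R :> L) (h2 : (n + 2)%:R = 1 :> L)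
  (h1 : (n + 1)%:R = 0 :> L) (h0 : n%:R = -1 :> L)
  (h2ne : 2%:R != 0 :> L) (h3ne : 3%:R != 0 :> L) :
  ~~ (('X - z%:P) ^+ 5 %| Gc n 1 1 1 1 1).
Proof.
apply/negP=> d5.
have d4 := dvd_Eop d5; rewrite EGc // in d4.
have d3 := dvd_Eop d4; rewrite EGc // in d3.
have d2 := dvd_Eop d3; rewrite EGc // in d2.
have d1 := dvd_Eop d2; rewrite EGc // in d1.
have e0 := dvd_root d5; have e1 := dvd_root d4; have e2 := dvd_root d3.
have e3 := dvd_root d2; have e4 := dvd_root d1.
rewrite hornerGc in e0; rewrite hornerGc in e1; rewrite hornerGc in e2;
rewrite hornerGc in e3; rewrite hornerGc in e4.
have := @g_comb _ _ _ _ _ _ _ (mc_rt L) 3%:R 2%:R _ _ _ _ _ erefl erefl e4 e3 e2 e1.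
move/eqP; rewrite !mulf_eq0 (negbTE h2ne) (negbTE h3ne) /= /W3 hornerXn expf_eq0 /=.
move/eqP=> z0; move: e0; rewrite z0 /W2 /W1 /W0 /Wm !hornerE !expr0n /=.
rewrite !addn_eq0 andbF /= (negbTE (lt0n_neq0 hn)).
by rewrite mulr0n !(addr0, add0r, subr0, sub0r) => /eqP; rewrite oppr_eq0 oner_eq0.
Qed.
End Part1b.

Section G2.
Variables (T : Type) (z o : T) (ad mu sb : T -> T -> T) (op : T -> T).
Hypothesis th : ring_theory z o ad mu sb op eq.
Add Ring GR2 : th.
Local Infix "+" := ad. Local Infix "*" := mu. Local Notation "- x" := (op x).
Local Notation "x - y" := (sb x y).
Lemma g_Qs A B C D E3 E2 X :
  A - B - C - D + E3 + E2 + X - o = E3 + (A + E2) + (X - B) + (- C - o) + (- D).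
Proof. ring. Qed.
End G2.

Lemma redpQ (L : fieldType) k : redp L (Qk k) = Gc (4 * k + 1) (1 : L) 1 1 1 1.
Proof.
rewrite /Qk /redp !rmorphB !rmorphD /= !rmorphN !map_polyXn map_polyX rmorph1 /= !map_polyXn.
have -> : (4 * k + 4 = (4 * k + 1) + 3)%N by rewrite -addnA.
have -> : (4 * k + 3 = (4 * k + 1) + 2)%N by rewrite -addnA.
have -> : (4 * k + 2 = (4 * k + 1) + 1)%N by rewrite -addnA.
rewrite /Gc !scale1r /W3 /W2 /W1 /W0 /Wm.
exact (@g_Qs _ _ _ _ _ _ _ (mc_rt {poly L}) _ _ _ _ _ _ _).
Qed.

Lemma pchar_facts (L : fieldType) (k p : nat) : p \in [pchar L] ->
  (3 < p)%N -> (p %| (2 * k).+1)%N ->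
  [/\ (4 * k + 1 + 3)%:R = 2%:R :> L, (4 * k + 1 + 2)%:R = 1 :> L,
      (4 * k + 1 + 1)%:R = 0 :> L & (4 * k + 1)%:R = -1 :> L] /\
  (2%:R != 0 :> L /\ 3%:R != 0 :> L).
Proof.
move=> hc hp3 hd.
have z0 : ((2 * k).+1)%:R = 0 :> L by apply/eqP; rewrite -(dvdn_pcharf hc).
have e1 : (4 * k + 1 + 1 = (2 * k).+1 * 2)%N by rewrite -?plusE -?multE; lia.
have e1' : (4 * k + 1 + 1)%:R = 0 :> L by rewrite e1 natrM z0 mul0r.
have ne : forall m, (0 < m)%N -> (m <= 3)%N -> m%:R != 0 :> L.
  move=> m m0 m3; rewrite -(dvdn_pcharf hc); apply/negP=> /(dvdn_leq m0).
  by move=> h; move: (leq_trans h m3); rewrite leqNgt hp3.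
split; last by split; apply: ne.
split => //.
- have -> : (4*k+1+3 = 4*k+1+1+2)%N by rewrite -!addnA.
  by rewrite natrD e1' add0r.
- have -> : (4*k+1+2 = 4*k+1+1+1)%N by rewrite -!addnA.
  by rewrite natrD e1' add0r.
- by move: e1'; rewrite natrD => /eqP; rewrite addr_eq0 => /eqP.
Qed.

Section G3.
Variables (T : Type) (z o : T) (ad mu sb : T -> T -> T) (op : T -> T).
Hypothesis th : ring_theory z o ad mu sb op eq.
Add Ring GR3 : th.
Local Infix "+" := ad. Local Infix "*" := mu. Local Notation "- x" := (op x).
Local Notation "x - y" := (sb x y).
Lemma g_tele Y4 Y S g : (Y4 - o) * S = (Y - o) * g ->
  (Y4 - o) * (S + Y * g) = (Y4 * Y - o) * g.
Proof.
move=> h; transitivity ((Y4 - o) * S + (Y4 - o) * (Y * g)); first ring.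
rewrite h; ring.
Qed.
Lemma g_QP Y x4 x3 x2 x1 :
  Y * x4 - Y * x3 - Y * x2 - Y * x1 + x3 + x2 + x1 - o =
  (x4 - o) + (Y - o) * (x4 - x3 - x2 - x1).
Proof. ring. Qed.
End G3.

Lemma tele (k : nat) :
  ('X^4 - 1) * (\sum_(1 <= l < k.+1) 'X^(4 * l - 4) * ('X^4 - 'X^3 - 'X^2 - 'X))
  = ('X^(4 * k) - 1) * ('X^4 - 'X^3 - 'X^2 - 'X : {poly int}).
Proof.
elim: k => [|k IH].
  by rewrite big_geq // muln0 expr0 subrr mulr0 mul0r.
rewrite big_nat_recr //= mulnS addKn [in RHS]exprD.
exact: (@g_tele _ _ _ _ _ _ _ (mc_rt {poly int}) _ _ _ _ IH).
Qed.

Lemma QkE k : Qk k = ('X^4 - 1) * Pk k.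
Proof.
rewrite /Pk mulrDr tele mulr1 /Qk !(exprD _ (4 * k)) expr1.
exact: (@g_QP _ _ _ _ _ _ _ (mc_rt {poly int})).
Qed.

Lemma redpM (R : comNzRingType) f g : redp R (f * g) = redp R f * redp R g.
Proof. by rewrite /redp rmorphM. Qed.

Section Part1c.
Variables (L : fieldType) (k p : nat).
Hypotheses (hc : p \in [pchar L]) (hp3 : (3 < p)%N) (hd : (p %| (2 * k).+1)%N).

Lemma part1Q z : ~~ (('X - z%:P) ^+ 5 %| redp L (Qk k)).
Proof.
rewrite redpQ; have [[a b c d] [e f]] := pchar_facts hc hp3 hd.
apply: (@part1_core L z (4*k+1) _ a b c d e f). by rewrite addn1.
Qed.

Lemma part1P z : ~~ (('X - z%:P) ^+ 5 %| redp L (Pk k)).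
Proof.
apply/negP=> h; move/negP: (part1Q z); apply.
by rewrite QkE redpM dvdp_mull.
Qed.

Lemma redpQ_neq0 : redp L (Qk k) != 0.
Proof. by apply/negP=> /eqP h; move: (part1Q 0); rewrite h dvdp0. Qed.

Lemma redpP_neq0 : redp L (Pk k) != 0.
Proof. by apply/negP=> /eqP h; move: (part1P 0); rewrite h dvdp0. Qed.

Lemma part1 z : (mup z (redp L (Qk k)) <= 4)%N /\ (mup z (redp L (Pk k)) <= 4)%N.
Proof.
by split; rewrite -ltnS mup_ltn ?redpQ_neq0 ?redpP_neq0 ?part1Q ?part1P.
Qed.
End Part1c.

Lemma psmallS j : psmall j.+1 = (ppair j).2.
Proof. by rewrite /psmall /=; case: (ppair j). Qed.

Lemma psmallSS j : psmall j.+2 = ('X^2 - 2%:P) * psmall j.+1 - psmall j.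
Proof. by rewrite psmallS psmallS /psmall /=; case: (ppair j). Qed.

Section G4.
Variables (T : Type) (z o : T) (ad mu sb : T -> T -> T) (op : T -> T).
Hypothesis th : ring_theory z o ad mu sb op eq.
Add Ring GR4 : th.
Local Infix "+" := ad. Local Infix "*" := mu. Local Notation "- x" := (op x).
Local Notation "x - y" := (sb x y).
Lemma g_Prec P0 P1 P2 Y4 D0 D1 : P1 = P0 + D0 -> P2 = P1 + D1 -> D1 = Y4 * D0 ->
  P2 = (Y4 + o) * P1 - Y4 * P0.
Proof. move=> h1 h2 h3; rewrite h2 h3 h1; ring. Qed.
End G4.

Lemma PkS j : Pk j.+1 = Pk j + 'X^(4 * j) * ('X^4 - 'X^3 - 'X^2 - 'X).
Proof. by rewrite /Pk big_nat_recr //= mulnS addKn addrA. Qed.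

Lemma PkSS j : Pk j.+2 = ('X^4 + 1) * Pk j.+1 - 'X^4 * Pk j.
Proof.
apply: (@g_Prec _ _ _ _ _ _ _ (mc_rt {poly int}) _ _ _ _ _ _ (PkS j) (PkS j.+1)).
by rewrite mulnS exprD mulrA.
Qed.

Section G5.
Variables (T : Type) (z o : T) (ad mu sb : T -> T -> T) (op : T -> T).
Hypothesis th : ring_theory z o ad mu sb op eq.
Add Ring GR5 : th.
Local Infix "+" := ad. Local Infix "*" := mu. Local Notation "- x" := (op x).
Local Notation "x - y" := (sb x y).
Variables (x u two three five : T).
Hypotheses (hs : x * u = x * x + o) (h2 : two = o + o) (h3 : three = o + (o + o))
  (h5 : five = o + (o + (o + (o + o)))).
Lemma g_key0 : x * x * (u * u - u - three) = o + o * (x*(x*(x*x)) - x*(x*x) - x*x - x).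
Proof.
transitivity ((x*u)*(x*u) - x*(x*u) - three*(x*x)); first ring.
rewrite hs h3; ring.
Qed.
Lemma g_key1 : x*(x*(x*x))*((u*(u*u) - two*(u*u) - three*u + five)*(u+o)) =
  (o + o*(x*(x*(x*x)) - x*(x*x) - x*x - x)) + x*(x*(x*x))*(x*(x*(x*x)) - x*(x*x) - x*x - x).
Proof.
transitivity (((x*u)*(x*u)*(x*u) - two*x*((x*u)*(x*u)) - three*(x*x)*(x*u)
   + five*(x*(x*x)))*((x*u) + x)); first ring.
rewrite hs h2 h3 h5; ring.
Qed.
Lemma g_step Y A B : (x*(x*(x*x)) + o)*(Y*(x*x)*A) - x*(x*(x*x))*(Y*B) =
   Y*(x*(x*(x*x)))*((u*u - two)*A - B).
Proof.
symmetry; transitivity (Y*(x*x)*(((x*u)*(x*u) - two*(x*x))*A) - x*(x*(x*x))*(Y*B));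
 first ring.
rewrite hs h2; ring.
Qed.
End G5.

Section Key.
Variable K : fieldType.
Definition ev (t : K) (f : {poly int}) := (redp K f).[t].
Lemma evD t f g : ev t (f + g) = ev t f + ev t g.
Proof. by rewrite /ev /redp rmorphD hornerD. Qed.
Lemma evB t f g : ev t (f - g) = ev t f - ev t g.
Proof. by rewrite /ev /redp rmorphB hornerD hornerN. Qed.
Lemma evM t f g : ev t (f * g) = ev t f * ev t g.
Proof. by rewrite /ev /redp rmorphM hornerM. Qed.
Lemma evXn t n : ev t 'X^n = t ^+ n.
Proof. by rewrite /ev /redp map_polyXn hornerXn. Qed.
Lemma evX t : ev t 'X = t.
Proof. by rewrite /ev /redp map_polyX hornerX. Qed.
Lemma ev1 t : ev t 1 = 1.
Proof. by rewrite /ev /redp rmorph1 hornerC. Qed.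
Lemma evN t f : ev t (- f) = - ev t f.
Proof. by rewrite /ev /redp rmorphN hornerN. Qed.
Lemma evC t (c : int) : ev t c%:P = c%:~R.
Proof. by rewrite /ev /redp map_polyC hornerC. Qed.

Lemma expr3 (t : K) : t ^+ 3 = t * t * t. Proof. by rewrite !exprS expr0 mulr1 mulrA. Qed.
Lemma expr4 (t : K) : t ^+ 4 = t * t * t * t. Proof. by rewrite !exprS expr0 mulr1 !mulrA. Qed.

Variable x : K.
Hypothesis x0 : x != 0.
Let u := x + x^-1.
Lemma hs : x * u = x * x + 1.
Proof. by rewrite /u mulrDr mulfV. Qed.

Lemma key0 : ev x (Pk 1) = x ^+ 2 * ev u (psmall 0).
Proof.
rewrite PkS {1}/Pk big_geq // addr0 muln0 expr0 /psmall /=.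
rewrite !(evD, evB, evN, evM, evXn, evX, ev1, evC).
symmetry; exact (@g_key0 _ _ _ _ _ _ _ (mc_rt K) x u ((3:int)%:~R) hs erefl).
Qed.
Lemma key1 : ev x (Pk 2) = x ^+ 4 * ev u (psmall 1).
Proof.
rewrite PkS PkS {1}/Pk big_geq // addr0 muln0 muln1 expr0 psmallS /=.
rewrite !(evD, evB, evN, evM, evXn, evX, ev1, evC).
symmetry; exact (@g_key1 _ _ _ _ _ _ _ (mc_rt K) x u ((2:int)%:~R) ((3:int)%:~R)
  ((5:int)%:~R) hs erefl erefl erefl).
Qed.

Lemma key j : ev x (Pk j.+1) = x ^+ (2 * j.+1) * ev u (psmall j).
Proof.
suff H : forall j, ev x (Pk j.+1) = x ^+ (2 * j.+1) * ev u (psmall j) /\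
  ev x (Pk j.+2) = x ^+ (2 * j.+2) * ev u (psmall j.+1) by case: (H j).
elim=> [|i [IH0 IH1]]; first by split; [exact: key0 | exact: key1].
split=> //.
rewrite PkSS evB (evM _ (_ + 1)) (evM _ (GRing.exp (polyX int) 4)) evD !evXn ev1 IH1 IH0 psmallSS evB (evM _ (_ - _)) evB evXn evC.
have -> : (2 * i.+2 = 2 * i.+1 + 2)%N by rewrite -?plusE -?multE; lia.
have -> : (2 * i.+3 = 2 * i.+1 + 4)%N by rewrite -?plusE -?multE; lia.
rewrite !exprD.
exact (@g_step _ _ _ _ _ _ _ (mc_rt K) x u ((2:int)%:~R) hs erefl _ _ _).
Qed.
End Key.

Section G6.
Variables (T : Type) (z o : T) (ad mu sb : T -> T -> T) (op : T -> T).
Hypothesis th : ring_theory z o ad mu sb op eq.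
Add Ring GR6 : th.
Local Infix "+" := ad. Local Infix "*" := mu. Local Notation "- x" := (op x).
Local Notation "x - y" := (sb x y).
Lemma g_hom Y x u A C : Y * x * (A * u + C) = (Y * A) * (x * u) + Y * x * C.
Proof. ring. Qed.
End G6.

Section G7.
Variables (T : Type) (z o : T) (ad mu sb : T -> T -> T) (op : T -> T).
Hypothesis th : ring_theory z o ad mu sb op eq.
Add Ring GR7 : th.
Local Infix "+" := ad. Local Infix "*" := mu. Local Notation "- x" := (op x).
Local Notation "x - y" := (sb x y).
Local Notation p5 t := (t * (t * (t * (t * t)))).
Lemma g_final x u xM Ye tP Sv tV iw iw' :
  x * u = x * x + o -> tP = Ye * p5 x * (Sv * p5 (u - (iw + iw'))) ->
  xM * Sv = tV -> iw * iw' = o ->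
  xM * tP = Ye * p5 (x - iw') * tV * p5 (x - iw).
Proof.
move=> hs hk hV h1; rewrite hk.
transitivity (Ye * p5 (x * u - x * (iw + iw')) * (xM * Sv)); first ring.
rewrite hs hV -h1; ring.
Qed.
End G7.

Section Frac.
Variable L : fieldType.
Local Notation K := {fraction {poly L}}.
Local Notation tf := (@FracField.tofrac {poly L}).
Definition iota : L -> K := tf \o polyC.
Let x : K := tf 'X.
Let u : K := x + x^-1.

Lemma x_neq0 : x != 0.
Proof. by rewrite /x tofrac_eq0 polyX_eq0. Qed.

Lemma hsK : x * u = x * x + 1.
Proof. by rewrite /u mulrDr mulfV // x_neq0. Qed.

Lemma redpK f : redp K f = map_poly iota (redp L f).
Proof. rewrite /redp -map_poly_comp; apply: eq_map_poly => c /=.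
by rewrite -(rmorph_int iota).
Qed.
Lemma ev_tf f : ev x f = tf (redp L f).
Proof.
rewrite /ev redpK /iota map_poly_comp /x horner_map /=.
by rewrite -/(comp_poly 'X (redp L f)) comp_polyXr.
Qed.

Lemma homog (S : {poly L}) : exists V, x ^+ (size S) * (map_poly iota S).[u] = tf V.
Proof.
elim/poly_ind: S => [|S c [V hV]].
  by exists 0; rewrite rmorph0 horner0 mulr0 rmorph0.
rewrite size_MXaddC; case: ifP => [/andP[/eqP -> /eqP ->]|_].
  by exists 0; rewrite mul0r add0r !rmorph0 horner0 mulr0.
rewrite rmorphD rmorphM /= map_polyX map_polyC hornerD hornerM hornerX hornerC exprSr.
rewrite (g_hom (mc_rt K)) hV hsK.
exists (V * ('X * 'X + 1) + 'X ^+ (size S) * 'X * c%:P).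
rewrite [RHS]rmorphD [in RHS]rmorphM [in RHS]rmorphD [in RHS]rmorphM rmorph1.
rewrite [in RHS]rmorphM rmorphM rmorphXn. reflexivity.
Qed.

Lemma transfer (j : nat) (a w w' : L) (hw : w + w' = a) (hww : w * w' = 1)
  (hj : (5 <= 2 * j.+1)%N) (hdiv : ('X - a%:P) ^+ 5 %| redp L (psmall j)) :
  ('X - w%:P) ^+ 5 %| redp L (Pk j.+1).
Proof.
case/dvdpP: hdiv => S hS.
have hk := key x_neq0 j; rewrite ev_tf in hk.
have [V hV] := homog S.
have cop : coprimep (('X - w%:P) ^+ 5) ('X ^+ (size S)).
  apply/coprimep_expl/coprimep_expr.
  rewrite -[X in coprimep _ X]subr0 -[X in coprimep _ (_ - X)]polyC0 coprimep_XsubC.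
  rewrite rootE !hornerE oppr_eq0.
  by apply/eqP=> w0; move: hww; rewrite w0 mul0r => /eqP; rewrite eq_sym oner_eq0.
rewrite -(Gauss_dvdpr _ cop).
apply/dvdpP; exists ('X ^+ (2 * j.+1 - 5) * ('X - w'%:P) ^+ 5 * V).
apply/eqP; rewrite -tofrac_eq; apply/eqP.
rewrite !rmorphM !rmorphXn !rmorphB /=.
rewrite /ev redpK hS rmorphM hornerM rmorphXn horner_exp rmorphB /= map_polyX map_polyC
  hornerXsubC -hw raddfD -(subnK hj) exprD in hk.
have h1 : iota w * iota w' = 1 by rewrite -rmorphM hww rmorph1.
exact (g_final (mc_rt K) hsK hk hV h1).
Qed.
End Frac.


Section G8.
Variables (T : Type) (z o : T) (ad mu sb : T -> T -> T) (op : T -> T).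
Hypothesis th : ring_theory z o ad mu sb op eq.
Add Ring GR8 : th.
Local Infix "+" := ad. Local Infix "*" := mu. Local Notation "- x" := (op x).
Local Notation "x - y" := (sb x y).
Lemma g_ww' w a : w * w = - o * o + (a * w + z) -> w * (a - w) = o.
Proof.
move=> hw; transitivity (a * w - w * w); first ring.
rewrite hw; ring.
Qed.
End G8.

Lemma part2 (k p : nat) (hk : (3 <= k)%N) (hp : prime p)
    (hp3 : (3 < p)%N) (hdiv : (p %| (2 * k).+1)%N) (a : 'F_p) :
  ~~ (('X - a%:P) ^+ 5 %| redp 'F_p (psmall k.-1)).
Proof.
apply/negP=> hd.
have [L [f _]] := countable_algebraic_closure [the countFieldType of 'F_p].
have hc : p \in [pchar L] := rmorph_pchar f (pchar_Fp hp).
have hdL : ('X - (f a)%:P) ^+ 5 %| redp L (psmall k.-1).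
  move: hd; rewrite -(dvdp_map f) rmorphXn rmorphB /= map_polyX map_polyC.
  suff -> : map_poly f (redp 'F_p (psmall k.-1)) = redp L (psmall k.-1) by [].
  by rewrite /redp -map_poly_comp; apply: eq_map_poly => c /=; rewrite rmorph_int.
have [w hw] := @solve_monicpoly L 2 (fun i => if i is 0 then -1 else f a) isT.
rewrite !big_ord_recl big_ord0 /= in hw.
have hww : w * (f a - w) = 1.
  exact (@g_ww' _ _ _ _ _ _ _ (mc_rt L) w (f a) hw).
have hsum : w + (f a - w) = f a by rewrite addrC subrK.
have hj : (5 <= 2 * k.-1.+1)%N.
  by rewrite prednK ?(leq_trans _ hk) //; apply: leq_trans (leq_mul (leqnn 2) hk).
have := transfer hsum hww hj hdL; rewrite prednK ?(leq_trans _ hk) //.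
by move=> h; move: (part1P hc hp3 hdiv w); rewrite h.
Qed.

Lemma pSS_eval j :
  (psmall j.+2).[-1] = - (psmall j.+1).[-1] - (psmall j).[-1] :> int.
Proof. by rewrite psmallSS !hornerE /= mulN1r. Qed.

Lemma pm1 t : [/\ (psmall (3 * t)).[-1] = -1, (psmall (3 * t).+1).[-1] = 0
  & (psmall (3 * t).+2).[-1] = 1 :> int].
Proof.
elim: t => [|t [h0 h1 h2]].
  have e0 : (psmall 0).[-1] = -1 :> int by rewrite /psmall /= !hornerE.
  have e1 : (psmall 1).[-1] = 0 :> int by rewrite psmallS /= !hornerE.
  by rewrite muln0 e0 e1 pSS_eval e0 e1.
rewrite mulnS addnC addn3.
have e3 : (psmall (3 * t).+3).[-1] = -1 :> int by rewrite pSS_eval h2 h1.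
have e4 : (psmall (3 * t).+4).[-1] = 0 :> int by rewrite pSS_eval e3 h2.
have e5 : (psmall (3 * t).+4.+1).[-1] = 1 :> int by rewrite pSS_eval e4 e3.
by [].
Qed.

Lemma part3 (k p : nat) (hk : (3 <= k)%N) (hp : prime p)
    (hp3 : (3 < p)%N) (hdiv : (p %| (2 * k).+1)%N) (n : 'F_p -> nat) :
  redp 'F_p (msmall k) = 'X * \prod_(a : 'F_p | a != 0) ('X - a%:P) ^+ n a ->
  forall a : 'F_p, a != 0 -> (n a <= 4)%N.
Proof.
move=> hm a ha; rewrite leqNgt; apply/negP=> h5.
have d : ('X - a%:P) ^+ 5 %| redp 'F_p (msmall k).
  rewrite hm; apply: dvdp_mull; rewrite (bigD1 a) //=; apply: dvdp_mulr.
  exact: dvdp_exp2l.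
move/negP: (part2 hk hp hp3 hdiv a); apply.
move: d; rewrite /msmall; case: ifP => // hk3.
have ek : k.-1 = (3 * (k %/ 3)).+1.
  by rewrite {1}(divn_eq k 3) (eqP hk3) mulnC addn2.
have hr : root (psmall k.-1) (-1).
  by rewrite /root ek; case: (pm1 (k %/ 3)) => _ -> _.
have [q hq] := factor_theorem _ _ hr.
have hX : 'X - (-1)%:P = 'X + 1 :> {poly int} by rewrite polyCN opprK.
rewrite hq hX Pdiv.IdomainMonic.mulpK; last by rewrite -polyC1 monicXaddC.
by move=> h; rewrite redpM dvdp_mulr.
Qed.

Theorem mainTheorem12 (k p : nat) (hk : (3 <= k)%N) (hp : prime p)
    (hp3 : (3 < p)%N) (hdiv : (p %| (2 * k).+1)%N) :
  (forall (L : closedFieldType), p \in [pchar L] ->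
     forall z : L, (mup z (redp L (Qk k)) <= 4)%N /\ (mup z (redp L (Pk k)) <= 4)%N)
  /\ (forall a : 'F_p, ~~ (('X - a%:P) ^+ 5 %| redp 'F_p (psmall k.-1)))
  /\ (forall n : 'F_p -> nat,
        redp 'F_p (msmall k) = 'X * \prod_(a : 'F_p | a != 0) ('X - a%:P) ^+ n a ->
        forall a : 'F_p, a != 0 -> (n a <= 4)%N).
Proof.
split; first by move=> L hc z; exact: (part1 hc hp3 hdiv).
split; first exact: part2.
exact: part3.
Qed.
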